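(* Suppose the relationship network on $V$ is fixed and known to the designer. For a distinguished agent $k\in V$ define the mechanism $g^{2,k}$ by, for $i\in V\setminus\{k\}$, $$g^{2,k}_i(\mathbf m)=\begin{cases}\dfrac{1}{|\mathrm{posE}(\mathbf m_{E_i\cap E_k})\setminus\{k\}|}, & \text{if } i\in \mathrm{posE}(\mathbf m_{E_k}),\\[2mm] 0,&\text{otherwise,}\end{cases}\qquad g^{2,k}_k(\mathbf m)=1-\sum_{i\in V\setminus\{k\}}g^{2,k}_i(\mathbf m).$$ Then for every $k\in V$, $g^{2,k}$ is valid and DSIC. Moreover, if the Intersection Condition E(k) holds, i.e. $E_i\cap E_j\cap E_k\neq\varnothing$ for all $i,j\in V\setminus\{k\}$ (including $i=j$), then $g^{2,k}$ is efficient.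
   Context: Let $V=\{1,\dots,n\}$ be a finite set of agents. A relationship network on $V$ assigns to every unordered pair of distinct agents exactly one of three symmetric relations: friends, enemies, or impartial. For $i\in V$, $F_i,E_i,I_i$ denote the sets of friends, enemies and impartials of $i$; they partition $V\setminus\{i\}$, and $j\in F_i\iff i\in F_j$ (similarly for $E$ and $I$). A set $N\subseteq V$ is the set of needy agents. Preferences: fix weights $w_f,w_e>0$. For $p,p'\in[0,1]^V$, $p\succ_i p'$ iff either $p_i>p'_i$, or $p_i=p'_i$ and $w_f\sum_{j\in F_i}(p_j-p'_j)-w_e\sum_{j\in E_i}(p_j-p'_j)>0$; $p\succsim_i p'$ means not $p'\succ_i p$. Known-network setting: each agent $i$ sends a message $m_i\subseteq V$ (the set of agents $i$ reports as needy; $j\in m_i$ is a positive vote of $i$ on $j$). A message profile is $\mathbf m=(m_i)_{i\in V}$; for $X\subseteq V$, $\mathbf m_X=(m_j)_{j\in X}$. A mechanism is a function $g:(2^V)^V\to[0,1]^V$; it is valid if $\sum_{i\in V}g_i(\mathbf m)\le 1$ for all $\mathbf m$; it is DSIC if for all $i\in V$, all profiles $\mathbf m$ and all $m'_i\subseteq V$, $g(\mathbf m)\succsim_i g(m'_i,\mathbf m_{-i})$; it is efficient if for every nonempty $N\subseteq V$, at the truthful profile $\mathbf m$ with $m_j=N$ for all $j$, $\sum_{i\in N}g_i(\mathbf m)=1$. For $X\subseteq V$, $\mathrm{posE}(\mathbf m_X)$ is the set of agents $j\in V$ such that $j\in m_l$ for every $l\in X\cap E_j$ (i.e. $j$ receives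 positive votes from all its enemies in $X$). *)

(* Defs.v *)
From mathcomp Require Import all_boot all_order all_algebra.
Set Implicit Arguments. Unset Strict Implicit. Unset Printing Implicit Defensive.
Import Order.TTheory GRing.Theory Num.Theory.
Local Open Scope ring_scope.

Inductive relation3 := Friends | Enemies | Impartial.

Definition is_friends (r : relation3) : bool :=
  if r is Friends then true else false.
Definition is_enemies (r : relation3) : bool :=
  if r is Enemies then true else false.

(* Agents are 'I_n; a network is a symmetric map net : 'I_n -> 'I_n -> relation3
   (its values on the diagonal are irrelevant). *)
Definition symmetric_network n (net : 'I_n -> 'I_n -> relation3) :=
  forall i j, net i j = net j i.

Definition Fr n (net : 'I_n -> 'I_n -> relation3) (i : 'I_n) : {set 'I_n} :=
  [set j | (j != i) && is_friends (net i j)].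
Definition En n (net : 'I_n -> 'I_n -> relation3) (i : 'I_n) : {set 'I_n} :=
  [set j | (j != i) && is_enemies (net i j)].

(* A message profile: each agent reports a set of agents as needy. *)
Definition profile n := 'I_n -> {set 'I_n}.

Definition upd n (m : profile n) (i : 'I_n) (mi : {set 'I_n}) : profile n :=
  fun j => if j == i then mi else m j.

Definition posE n (net : 'I_n -> 'I_n -> relation3) (m : profile n)
  (X : {set 'I_n}) : {set 'I_n} :=
  [set j | [forall l in X :&: En net j, j \in m l]].

Definition g2_other {R : realFieldType} n (net : 'I_n -> 'I_n -> relation3)
  (k : 'I_n) (m : profile n) (i : 'I_n) : R :=
  if i \in posE net m (En net k)
  then 1 / (#|posE net m (En net i :&: En net k) :\ k|%:R)
  else 0.

Definition g2 {R : realFieldType} n (net : 'I_n -> 'I_n -> relation3)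
  (k : 'I_n) (m : profile n) (i : 'I_n) : R :=
  if i == k then 1 - \sum_(j | j != k) g2_other net k m j
  else g2_other net k m i.

Definition is_mechanism {R : realFieldType} n (g : profile n -> 'I_n -> R) :=
  forall m i, 0 <= g m i <= 1.

Definition valid {R : realFieldType} n (g : profile n -> 'I_n -> R) :=
  forall m, \sum_i g m i <= 1.

Definition spref {R : realFieldType} n (wf we : R)
  (net : 'I_n -> 'I_n -> relation3) (i : 'I_n) (p p' : 'I_n -> R) : Prop :=
  p' i < p i \/
  (p i = p' i /\
   0 < wf * (\sum_(j in Fr net i) (p j - p' j))
       - we * (\sum_(j in En net i) (p j - p' j))).

Definition DSIC {R : realFieldType} n (wf we : R)
  (net : 'I_n -> 'I_n -> relation3) (g : profile n -> 'I_n -> R) :=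
  forall (i : 'I_n) (m : profile n) (mi : {set 'I_n}),
    ~ spref wf we net i (g (upd m i mi)) (g m).

Definition efficient {R : realFieldType} n (g : profile n -> 'I_n -> R) :=
  forall N : {set 'I_n}, N != set0 ->
    \sum_(i in N) g (fun _ => N) i = 1.

Definition intersection_condition n (net : 'I_n -> 'I_n -> relation3) (k : 'I_n) :=
  forall i j : 'I_n, i != k -> j != k ->
    En net i :&: En net j :&: En net k != set0.

(* Main.v *)
Require Import Defs.
From mathcomp Require Import all_boot all_order all_algebra.
Import Order.TTheory GRing.Theory Num.Theory.
Local Open Scope ring_scope.

Lemma posE_upd n (net : 'I_n -> 'I_n -> relation3) (m : profile n) (i : 'I_n) (mi : {set 'I_n}) (X : {set 'I_n}) :
  i \notin X -> posE net (upd m i mi) X = posE net m X.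
Proof.
move=> Hi; apply/setP => j; rewrite !inE; apply: eq_forallb => l.
rewrite /upd; case: (l =P i) => [->|//].
by rewrite inE (negbTE Hi).
Qed.

Lemma mem_posE_upd n (net : 'I_n -> 'I_n -> relation3) (m : profile n) (i : 'I_n) (mi : {set 'I_n}) (X : {set 'I_n}) (j : 'I_n) :
  i \notin En net j -> (j \in posE net (upd m i mi) X) = (j \in posE net m X).
Proof.
move=> Hi; rewrite !inE; apply: eq_forallb => l.
rewrite /upd; case: (l =P i) => [->|//].
by rewrite inE (negbTE Hi) andbF.
Qed.

Lemma En_sym n (net : 'I_n -> 'I_n -> relation3) (i j : 'I_n) :
  symmetric_network net -> (i \in En net j) = (j \in En net i).
Proof. by move=> Hs; rewrite !inE eq_sym Hs. Qed.

Lemma g2o_upd1 (R : realFieldType) n (net : 'I_n -> 'I_n -> relation3) (k : 'I_n) (m : profile n) (i : 'I_n) (mi : {set 'I_n}) (j : 'I_n) :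
  i \notin En net j ->
  g2_other (R:=R) net k (upd m i mi) j = g2_other net k m j.
Proof.
move=> Hi; rewrite /g2_other mem_posE_upd // posE_upd //.
by rewrite inE negb_and Hi.
Qed.

Lemma g2o_upd2 (R : realFieldType) n (net : 'I_n -> 'I_n -> relation3) (k : 'I_n) (m : profile n) (i : 'I_n) (mi : {set 'I_n}) (j : 'I_n) :
  i \notin En net k ->
  g2_other (R:=R) net k (upd m i mi) j = g2_other net k m j.
Proof.
move=> Hi; rewrite /g2_other !posE_upd //.
by rewrite inE negb_and Hi orbT.
Qed.

Lemma posE_mono n (net : 'I_n -> 'I_n -> relation3) (m : profile n) (X Y : {set 'I_n}) :
  X \subset Y -> posE net m Y \subset posE net m X.
Proof.
move=> HXY; apply/subsetP => j; rewrite !inE => /forall_inP H.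
apply/forall_inP => l; rewrite inE => /andP [HlX HlE]; apply: H.
by rewrite inE (subsetP HXY _ HlX).
Qed.

Lemma inv_nat01 (R : realFieldType) (x : nat) : 0 <= 1 / (x%:R : R) <= 1.
Proof.
rewrite div1r; case: x => [|x]; first by rewrite invr0 lexx ler01.
rewrite invr_ge0 ler0n /= invr_le1 ?unitfE ?pnatr_eq0 ?ltr0Sn //.
by rewrite ler1n.
Qed.

Lemma sum_other_le1 (R : realFieldType) n (net : 'I_n -> 'I_n -> relation3) (k : 'I_n) (m : profile n) :
  \sum_(j | j != k) g2_other (R:=R) net k m j <= 1.
Proof.
set S := posE net m (En net k) :\ k.
apply: (@le_trans _ _ (\sum_(j | j != k) (if j \in S then (#|S|%:R : R)^-1 else 0))).
  apply: ler_sum => j Hjk; rewrite /g2_other.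
  case: ifP => Hj; last by case: ifP => _; rewrite ?invr_ge0 ?ler0n.
  have HjS : j \in S by rewrite /S in_setD1 Hjk Hj.
  rewrite HjS div1r.
  have Hsub : S \subset posE net m (En net j :&: En net k) :\ k.
    by apply: setSD; apply: posE_mono; apply: subsetIr.
  have H0 : (0 < #|S|)%N by rewrite card_gt0; apply/set0Pn; exists j.
  have H1 := subset_leq_card Hsub.
  rewrite ler_pV2 ?inE ?unitfE ?pnatr_eq0 -?lt0n ?ltr0n ?H0 ?(leq_trans H0 H1) //.
  by rewrite ler_nat.
rewrite -big_mkcondr /=.
rewrite (eq_bigl (fun j => j \in S)); last first.
  by move=> j /=; rewrite /S in_setD1 andbA andbb.
rewrite sumr_const.
case: (#|S|) => [|s]; first by rewrite mulr0n ler01.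
by rewrite -(mulr_natr ((s.+1%:R : R)^-1)) mulVf ?pnatr_eq0.
Qed.

Lemma g2_mech (R : realFieldType) n (net : 'I_n -> 'I_n -> relation3) (k : 'I_n) :
  is_mechanism (g2 (R:=R) net k).
Proof.
move=> m i; rewrite /g2; case: ifP => _.
  have H := sum_other_le1 R _ net k m.
  have H0 : 0 <= \sum_(j | j != k) g2_other (R:=R) net k m j.
    by apply: sumr_ge0 => j _; rewrite /g2_other; case: ifP => // _; case/andP: (inv_nat01 R (#|posE net m (En net j :&: En net k) :\ k|)).
  apply/andP; split; first by rewrite subr_ge0.
  by rewrite lerBlDr lerDl.
rewrite /g2_other; case: ifP => _; last by rewrite lexx ler01.
exact: inv_nat01.
Qed.

Lemma sum_g2 (R : realFieldType) n (net : 'I_n -> 'I_n -> relation3) (k : 'I_n) (m : profile n) :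
  \sum_i g2 (R:=R) net k m i = 1.
Proof.
rewrite (bigD1 k) //= {1}/g2 eqxx.
rewrite (eq_bigr (g2_other net k m)); first by rewrite subrK.
by move=> i Hi; rewrite /g2 (negbTE Hi).
Qed.

Lemma g2_upd (R : realFieldType) n (net : 'I_n -> 'I_n -> relation3) (k : 'I_n) (m : profile n) (i : 'I_n) (mi : {set 'I_n}) (j : 'I_n) :
  symmetric_network net -> j \notin En net i ->
  g2 (R:=R) net k (upd m i mi) j = g2 net k m j.
Proof.
move=> Hs Hj; rewrite /g2; case: (j =P k) => [Ejk|_].
  subst j; congr (_ - _); apply: eq_bigr => l _; apply: g2o_upd2.
  by rewrite En_sym.
by apply: g2o_upd1; rewrite En_sym.
Qed.

Theorem theorem2 (R : realFieldType) (n : nat) (wf we : R)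
  (net : 'I_n -> 'I_n -> relation3) (k : 'I_n) :
  symmetric_network net -> 0 < wf -> 0 < we ->
  [/\ is_mechanism (g2 (R:=R) net k),
      valid (g2 (R:=R) net k),
      DSIC wf we net (g2 net k)
    & (intersection_condition net k -> efficient (g2 (R:=R) net k))].
Proof.
move=> Hs Hwf Hwe; split.
- exact: g2_mech.
- by move=> m; rewrite sum_g2.
- move=> i m mi.
  have Hii : i \notin En net i by rewrite inE eqxx.
  move=> [H|[_ H]].
    by move: H; rewrite g2_upd // ltxx.
  have HF : \sum_(j in Fr net i) (g2 (R:=R) net k (upd m i mi) j - g2 net k m j) = 0.
    apply: big1 => j; rewrite inE => /andP [_ Hf].
    rewrite g2_upd ?subrr //.
    by rewrite inE negb_and; move: Hf; case: (net i j) => //; rewrite orbT.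
  have HE : \sum_(j in En net i) (g2 (R:=R) net k (upd m i mi) j - g2 net k m j) = 0.
    have := sumrB (index_enum 'I_n) xpredT (g2 (R:=R) net k (upd m i mi)) (g2 net k m).
    rewrite !sum_g2 subrr (bigID (fun j => j \in En net i)) /=.
    rewrite [X in _ + X = _]big1 ?addr0 //.
    by move=> j /= Hj; rewrite g2_upd ?subrr.
  by move: H; rewrite HF HE !mulr0 subrr ltxx.
- move=> IC N HN.
  set m := fun _ : 'I_n => N.
  have inN : forall j X, j \in N -> j \in posE net m X.
    by move=> j X Hj; rewrite inE; apply/forall_inP => l _.
  have notN : forall j X l, j \notin N -> l \in X :&: En net j -> j \notin posE net m X.
    move=> j X l Hj Hl; apply/negP; rewrite inE => /forall_inP /(_ l Hl).
    by rewrite (negbTE Hj).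
  have C1 : forall i, i != k -> (i \in posE net m (En net k)) = (i \in N).
    move=> i Hik; case HiN: (i \in N); first exact: inN.
    have := IC i i Hik Hik; case/set0Pn => l Hl.
    apply/negbTE; apply: (notN _ _ l); first by rewrite HiN.
    by move: Hl; rewrite !inE; case/andP => /andP [H1 _] H2; rewrite H1 H2.
  have C2 : forall i, i != k -> posE net m (En net i :&: En net k) :\ k = N :\ k.
    move=> i Hik; apply/setP => l; rewrite !in_setD1.
    case Hlk: (l != k) => //=.
    case HlN: (l \in N); first exact: inN.
    have := IC l i Hlk Hik; case/set0Pn => q Hq.
    apply/negbTE; apply: (notN _ _ q); first by rewrite HlN.
    by move: Hq; rewrite !inE; case/andP => /andP [-> ->] ->.
  have G : forall i, i != k -> g2 (R:=R) net k m i =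
      if i \in N then (#|N :\ k|%:R)^-1 else 0.
    by move=> i Hik; rewrite /g2 (negbTE Hik) /g2_other C1 // C2 // div1r.
  case: (boolP (k \in N)) => HkN.
    have := sum_g2 R _ net k m.
    rewrite (bigID (fun i => i \in N)) /= [X in _ + X]big1 ?addr0 //.
    move=> i Hi; rewrite G ?(negbTE Hi) //.
    by apply/eqP => E; rewrite E HkN in Hi.
  have HD : N :\ k = N by apply/setP => l; rewrite in_setD1; case: eqP => // ->; rewrite (negbTE HkN).
  rewrite (eq_bigr (fun _ => (#|N|%:R : R)^-1)); last first.
    move=> i Hi; rewrite G ?Hi ?HD //.
    by apply/eqP => E; rewrite -E Hi in HkN.
  by rewrite sumr_const -(mulr_natr ((#|N|%:R : R)^-1)) mulVf // pnatr_eq0 -lt0n card_gt0.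
Qed.
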